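(* Let $n\geq 4$, $G=M_{3^n}=\langle a,b\mid a^{3^{n-1}}=b^3=e,\ b^{-1}ab=a^{3^{n-2}+1}\rangle$, $c=a^{3^{n-2}}$, $C=\langle c\rangle$, $B=\langle b\rangle$, $H=C\times B$. Let $\mathcal{A}$ be the $S$-ring over $G$ whose basic sets are $Z_0=\{e\}$, $Z_1=\{b,b^2\}$, $Z_2=\{c,c^2\}$, $Z_3=\{cb,cb^2,c^2b,c^2b^2\}$, $Z_4=a\{e,cb,c^2b^2\}\cup a^{-1}\{e,c^2b,cb^2\}$, $Z_5=(aH\cup a^{-1}H)\setminus Z_4$, $X_k=a^{3k}C\cup a^{-3k}C$ and $Y_k=(a^{3k}H\cup a^{-3k}H)\setminus X_k$ for $k=1,\dots,\frac{3^{n-3}-1}{2}$, and $T_j=a^jH\cup a^{-j}H$ for all integers $2\leq j\leq \frac{3^{n-2}-1}{2}$ with $j\not\equiv 0\pmod 3$. Then $\mathcal{A}$ is not schurian.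
   Context: For $X\subseteq G$, $\underline{X}=\sum_{x\in X}x\in\mathbb{Z}G$. A subring $\mathcal{A}$ of $\mathbb{Z}G$ is an $S$-ring over $G$ with basic sets forming a partition $\mathcal{S}(\mathcal{A})$ of $G$ if $\{e\}\in\mathcal{S}(\mathcal{A})$, $X\in\mathcal{S}(\mathcal{A})\Rightarrow X^{-1}\in\mathcal{S}(\mathcal{A})$, and $\mathcal{A}=\mathrm{Span}_{\mathbb{Z}}\{\underline{X}: X\in\mathcal{S}(\mathcal{A})\}$ (the span of the listed sets is indeed closed under multiplication). Let $G_{right}=\{x\mapsto xg: g\in G\}$. An $S$-ring $\mathcal{A}$ over $G$ is schurian if there is a permutation group $\Gamma$ with $G_{right}\leq\Gamma\leq\mathrm{Sym}(G)$ such that the basic sets of $\mathcal{A}$ are exactly the orbits on $G$ of the stabilizer $\Gamma_e$ of $e$ in $\Gamma$. *)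

(* Defs.v *)
From mathcomp Require Import all_boot all_fingroup.
Set Implicit Arguments. Unset Strict Implicit. Unset Printing Implicit Defensive.
Local Open Scope group_scope.

Section Defs.
Variable gT : finGroupType.

Definition rmul_perm (g : gT) : {perm gT} := perm (mulIg g).

Definition G_right : {set {perm gT}} := [set rmul_perm g | g : gT].

(* A partition S of G (= all of gT) into basic sets is schurian if some
   permutation group Gam with G_right <= Gam <= Sym(G) has point
   stabilizer Gam_e whose orbits on G are exactly the sets of S. *)
Definition schurian_partition (S : {set {set gT}}) : Prop :=
  exists Gam : {group {perm gT}},
    G_right \subset Gam /\
    [set orbit 'P 'C_Gam[(1 : gT) | 'P] x | x : gT] = S.

Variables (n : nat) (a b : gT).
Definition cM : gT := a ^+ (3 ^ (n - 2)).
Definition CM : {set gT} := <[cM]>.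
Definition BM : {set gT} := <[b]>.
Definition HM : {set gT} := CM * BM.

Definition Z0 : {set gT} := [set 1].
Definition Z1 : {set gT} := [set b; b ^+ 2].
Definition Z2 : {set gT} := [set cM; cM ^+ 2].
Definition Z3 : {set gT} :=
  [set cM * b; cM * b ^+ 2; cM ^+ 2 * b; cM ^+ 2 * b ^+ 2].
Definition Z4 : {set gT} :=
  (a *: [set 1; cM * b; cM ^+ 2 * b ^+ 2]) :|:
  (a^-1 *: [set 1; cM ^+ 2 * b; cM * b ^+ 2]).
Definition Z5 : {set gT} := ((a *: HM) :|: (a^-1 *: HM)) :\: Z4.
Definition Xk (k : nat) : {set gT} :=
  (a ^+ (3 * k) *: CM) :|: (a ^- (3 * k) *: CM).
Definition Yk (k : nat) : {set gT} :=
  ((a ^+ (3 * k) *: HM) :|: (a ^- (3 * k) *: HM)) :\: Xk k.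
Definition Tj (j : nat) : {set gT} :=
  (a ^+ j *: HM) :|: (a ^- j *: HM).

Definition basic_sets_A : {set {set gT}} :=
  [set S : {set gT} |
    [|| S == Z0, S == Z1, S == Z2, S == Z3, S == Z4, S == Z5,
        [exists k : 'I_(3 ^ n),
           [&& 1 <= (k : nat), (k : nat) <= (3 ^ (n - 3) - 1) %/ 2
             & (S == Xk k) || (S == Yk k)]]
      | [exists j : 'I_(3 ^ n),
           [&& 2 <= (j : nat), (j : nat) <= (3 ^ (n - 2) - 1) %/ 2,
               (j : nat) %% 3 != 0 & S == Tj j]]]].
End Defs.

(* Main.v *)
Require Import Defs.
From mathcomp Require Import all_boot all_fingroup all_algebra all_solvable zify.
From mathcomp.algebra_tactics Require Import ring.
Set Implicit Arguments. Unset Strict Implicit. Unset Printing Implicit Defensive.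
Import GRing.Theory Num.Theory.
Local Open Scope group_scope.

Section Pow.
Variable gT : finGroupType.
Implicit Types (x : gT) (z : int).

Definition P x z : gT := x ^+ `|(z %% #[x]%:Z)%Z|.

Lemma ordz_neq0 x : (#[x]%:Z != 0)%R.
Proof. by rewrite eqz_nat -lt0n order_gt0. Qed.

Lemma P_absE x z : (`|(z %% #[x]%:Z)%Z|%:Z = (z %% #[x]%:Z)%Z)%R.
Proof. by rewrite gez0_abs // modz_ge0 // ordz_neq0. Qed.

Lemma P_nat x (k : nat) : P x k = x ^+ k.
Proof. by rewrite /P modz_nat absz_nat expg_mod_order. Qed.

Lemma P_congr x z1 z2 : (#[x]%:Z %| (z1 - z2)%R)%Z -> P x z1 = P x z2.
Proof. by rewrite -eqz_mod_dvd => /eqP h; rewrite /P h. Qed.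

Lemma P_mod x z : (#[x]%:Z %| (z - (`|(z %% #[x]%:Z)%Z|%:Z))%R)%Z.
Proof. by rewrite P_absE -eqz_mod_dvd modz_mod. Qed.

Lemma P_add x z1 z2 : P x (z1 + z2)%R = P x z1 * P x z2.
Proof.
rewrite {2 3}/P -expgD -P_nat; apply: P_congr.
rewrite PoszD.
have h1 := P_mod x z1; have h2 := P_mod x z2.
move: h1 h2 => /dvdzP[q1 h1] /dvdzP[q2 h2]; apply/dvdzP; exists (q1 + q2)%R.
by rewrite mulrDl -h1 -h2; ring.
Qed.

Lemma P_inj x z1 z2 : P x z1 = P x z2 -> (#[x]%:Z %| (z1 - z2)%R)%Z.
Proof.
rewrite /P => /eqP; rewrite eq_expg_mod_order !modn_small; last first.
- by rewrite -ltz_nat P_absE ltz_pmod // ltz_nat order_gt0.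
- by rewrite -ltz_nat P_absE ltz_pmod // ltz_nat order_gt0.
move=> /eqP h; rewrite -eqz_mod_dvd; apply/eqP.
by rewrite -P_absE h P_absE.
Qed.

Lemma P_mem x z : P x z \in <[x]>.
Proof. exact: mem_cycle. Qed.

End Pow.

Section M3.
Variables (gT : finGroupType) (a b : gT) (N K : nat).
Hypotheses (hNK : N = (9 * K)%N) (hK : (0 < K)%N) (hoa : #[a] = (3 * N)%N)
  (hob : #[b] = 3%N) (hTI : <[a]> :&: <[b]> = 1) (hab : a ^ b = a ^+ (N + 1)).

Definition E (al be v : int) : gT := P a (al + be * N%:Z)%R * P b v.

Lemma NzE : (N%:Z = 9 * K%:Z)%R.
Proof. by rewrite hNK PoszM. Qed.

Lemma A_congr z1 z2 : ((3 * N%:Z)%R %| (z1 - z2)%R)%Z -> P a z1 = P a z2.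
Proof. by move=> h; apply: P_congr; rewrite hoa PoszM. Qed.

Lemma A_congrP z1 z2 q : (z1 - z2 = q * (3 * N%:Z))%R -> P a z1 = P a z2.
Proof. by move=> h; apply: A_congr; apply/dvdzP; exists q. Qed.

Lemma conj_binv : a ^ b^-1 = a ^+ (1 + 2 * N).
Proof.
have h : (a ^+ (1 + 2 * N)) ^ b = a.
  rewrite conjXg hab -expgM -(P_nat a) -[a in RHS](P_nat a 1).
  apply: (@A_congrP _ _ (1 + 2 * 3 * K%:Z)%R).
  rewrite !(PoszM, PoszD) NzE. ring.
by rewrite -{1}h conjgK.
Qed.

Lemma bA j : b * P a j = P a (j + 2 * j * N%:Z)%R * b.
Proof.
have hk := P_mod a j.
rewrite {1}/P.
set k := `|(j %% #[a]%:Z)%Z|%N.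
have e1 : b * a ^+ k = (a ^+ k) ^ (b^-1) * b.
  by rewrite /conjg invgK !mulgA mulgKV.
rewrite e1 conjXg conj_binv -expgM -P_nat; congr (_ * _).
move: hk => /dvdzP[q hq]; rewrite -/k hoa PoszM in hq.
apply: (@A_congrP _ _ (- q * (1 + 2 * N%:Z))%R).
rewrite !(PoszM, PoszD).
have -> : (k%:Z = j - q * (3%:Z * N%:Z))%R by rewrite -hq; ring.
ring.
Qed.

Lemma bvA (m : nat) j : b ^+ m * P a j = P a (j + 2 * j * m%:Z * N%:Z)%R * b ^+ m.
Proof.
elim: m j => [|m IH] j.
  rewrite !expg0 mulg1 mul1g; apply: (@A_congrP _ _ 0%R); ring.
rewrite expgS -mulgA IH mulgA bA -mulgA -expgS; congr (_ * _).
apply: (@A_congrP _ _ (4 * j * m%:Z * 3 * K%:Z)%R).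
rewrite -[m.+1]addn1 PoszD NzE; ring.
Qed.

Lemma BA v j : P b v * P a j = P a (j + 2 * j * v * N%:Z)%R * P b v.
Proof.
have hk := P_mod b v.
rewrite {1 3}/P.
set k := `|(v %% #[b]%:Z)%Z|%N.
rewrite bvA; congr (_ * _).
move: hk => /dvdzP[q hq]; rewrite -/k hob in hq.
apply: (@A_congrP _ _ (- 2 * j * q)%R).
have -> : (k%:Z = v - q * 3)%R by rewrite -hq; ring.
ring.
Qed.

Lemma E_mul al be v ga de w :
  E al be v * E ga de w = E (al + ga)%R (be + de + 2 * ga * v)%R (v + w)%R.
Proof.
rewrite /E mulgA -[P a _ * _ * _]mulgA BA mulgA -P_add -mulgA -P_add.
congr (_ * _); apply: (@A_congrP _ _ (2 * de * v * 3 * K%:Z)%R).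
rewrite NzE; ring.
Qed.

Lemma E_congr al be v al' be' v' :
  ((3 * N%:Z)%R %| ((al + be * N%:Z) - (al' + be' * N%:Z))%R)%Z ->
  (3 %| (v - v')%R)%Z -> E al be v = E al' be' v'.
Proof.
move=> h1 h2; rewrite /E; congr (_ * _); first exact: A_congr.
by apply: P_congr; rewrite hob.
Qed.

Lemma E_eq al be v be' v' :
  (3 %| (be - be')%R)%Z -> (3 %| (v - v')%R)%Z -> E al be v = E al be' v'.
Proof.
move=> /dvdzP[q hq] h2; apply: E_congr => //; apply/dvdzP; exists q.
have -> : (al + be * N%:Z - (al + be' * N%:Z) = (be - be') * N%:Z)%R by ring.
rewrite hq; ring.
Qed.

Lemma E_inj al be v al' be' v' :
  E al be v = E al' be' v' -> (-9 < al - al' < 9)%R ->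
  [/\ al = al', (3 %| (be - be')%R)%Z & (3 %| (v - v')%R)%Z].
Proof.
rewrite /E => h hb.
set x := P a _ in h; set x' := P a _ in h; set y := P b v in h; set y' := P b v' in h.
have hxy : x'^-1 * x = y' * y^-1.
  by rewrite -[x](mulgK y) h -!mulgA mulKg.
have h1 : x'^-1 * x \in <[a]> :&: <[b]>.
  by rewrite inE {2}hxy !groupM ?groupV ?P_mem.
move: h1; rewrite hTI inE => /eqP h1.
have ex : x = x' by rewrite -[x](mulKVg x') h1 mulg1.
have ey : y = y'.
  by rewrite -[y'](mulgKV y) -hxy h1 mul1g.
move/P_inj: ex; rewrite hoa => /dvdzP[q hq].
move/P_inj: ey; rewrite hob => hv.
have hal : (al - al' = (3 * q - (be - be')) * N%:Z)%R.
  have -> : (al - al' = (al + be * N%:Z - (al' + be' * N%:Z)) - (be - be') * N%:Z)%R by ring.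
  rewrite hq; ring.
have hN9 : (9 <= N%:Z)%R by rewrite NzE; lia.
have h0 : (3 * q - (be - be') = 0)%R by nia.
split => //.
  by move: hal; rewrite h0 mul0r; lia.
apply/dvdzP; exists q; lia.
Qed.


Lemma E000 : E 0 0 0 = 1.
Proof. by rewrite /E mul0r addr0 (P_nat a 0) (P_nat b 0) expg0 mulg1. Qed.

Lemma E_inv al be v : (E al be v)^-1 = E (- al) (- be + 2 * al * v)%R (- v).
Proof.
apply/eqP; rewrite eq_invg_mul E_mul -E000.
apply/eqP; congr E; ring.
Qed.

Lemma aXE (k : nat) : a ^+ k = E k 0 0.
Proof. by rewrite /E mul0r addr0 (P_nat a) (P_nat b 0) expg0 mulg1. Qed.

Lemma aE : a = E 1 0 0.
Proof. by rewrite -aXE expg1. Qed.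

Lemma cXE (u : nat) : (a ^+ N) ^+ u = E 0 u 0.
Proof.
by rewrite /E add0r -PoszM (P_nat a) (P_nat b 0) expg0 mulg1 -expgM mulnC.
Qed.

Lemma bXE (v : nat) : b ^+ v = E 0 0 v.
Proof. by rewrite /E mul0r addr0 (P_nat a 0) (P_nat b) expg0 mul1g. Qed.

Lemma E_powd d u (m : nat) : (E d u 0) ^+ m = E (d * m%:Z)%R (u * m%:Z)%R 0.
Proof.
elim: m => [|m IH]; first by rewrite expg0 !mulr0 E000.
rewrite expgSr IH E_mul; congr E; rewrite -[m.+1]addn1 PoszD; ring.
Qed.

Definition Z4E (z : gT) := exists e t v : int,
  [/\ e = 1%R \/ e = (-1)%R, (0 <= v <= 2)%R, (3 %| (t - e * v)%R)%Z & z = E e t v].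
Definition X1E (z : gT) := exists d u : int, (d = 3%R \/ d = (-3)%R) /\ z = E d u 0.

Lemma Per_E z z' q q' : Z4E z -> Z4E z' -> X1E q -> X1E q' -> q' * z = z' * q ->
  z' = z /\ q' = q.
Proof.
move=> [e [t [v [he hv ht ->]]]] [e' [t' [v' [he' hv' ht' ->]]]].
move=> [d [u [hd ->]]] [d' [u' [hd' ->]]].
rewrite !E_mul => /E_inj [].
  by case: he => ->; case: he' => ->; case: hd => ->; case: hd' => ->.
move=> h1 h2 h3.
have ed : d' = d /\ e = e'.
  by case: he h1 => ->; case: he' => ->; case: hd => ->; case: hd' => -> ; lia.
case: ed => ed ee; subst d' e'.
have vv : v' = v by lia.
subst v'.
split; first by apply: E_eq; case: he ht ht' h2 => -> ; lia.
by apply: E_eq => //; case: he ht ht' h2 => ->; case: hd => ->; lia.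
Qed.

Lemma Sign_E q z0 z1 z2 : X1E q -> Z4E z0 -> Z4E z1 -> Z4E z2 -> q = z2 * z1 * z0 ->
  exists e t v, [/\ e = 1%R \/ e = (-1)%R, (0 <= v <= 2)%R, (3 %| (t - e * v)%R)%Z,
     z2 = E e t v & exists u, q = E (3 * e)%R u 0].
Proof.
move=> [d [u [hd ->]]] [e0 [t0 [v0 [he0 _ _ ->]]]] [e1 [t1 [v1 [he1 _ _ ->]]]].
move=> [e2 [t2 [v2 [he2 hv2 ht2 ->]]]].
rewrite !E_mul => /E_inj [].
  by case: he0 => ->; case: he1 => ->; case: he2 => ->; case: hd => ->.
move=> h1 _ _; exists e2, t2, v2; split => //; exists u; congr E.
by case: he0 h1 => ->; case: he1 => ->; case: he2 => ->; case: hd => ->; lia.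
Qed.

Lemma Final_E e t v : e = 1%R \/ e = (-1)%R -> (0 <= v <= 2)%R -> (3 %| (t - e * v)%R)%Z ->
  ~ Z4E (b ^+ 2 * ((E e t v)^-1 * E 0 e 0)^-1).
Proof.
move=> he hv ht [e' [t' [v' [he' hv' ht' h]]]].
have h2 : b ^+ 2 = E e' t' v' * (E e t v)^-1 * E 0 e 0.
  move: h; move: (E e t v) (E 0 e 0) (E e' t' v') => X Y Z <-.
  by rewrite invMg invgK !mulgA mulgK mulgKV.
move: h2; rewrite bXE E_inv !E_mul => /E_inj [].
  by case: he => ->; case: he' => ->.
move=> h1 h2 h3.
by case: he h1 h2 ht => ->; case: he' ht' => -> ; lia.
Qed.


Variable n : nat.
Hypothesis hNn : (3 ^ (n - 2))%N = N.

Lemma cMX (i : nat) : cM n a ^+ i = E 0 i 0.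
Proof. by rewrite /cM hNn cXE. Qed.

Lemma cM_E : cM n a = E 0 1 0.
Proof. by rewrite -cMX expg1. Qed.

Lemma bE : b = E 0 0 1.
Proof. by rewrite -bXE expg1. Qed.

Ltac z4solve := rewrite ?mulg1 ?cMX ?cM_E ?bXE ?bE ?aE ?E_inv ?E_mul;
  do 3 eexists; split; [..|reflexivity]; lia.

Lemma Z4_E z : z \in Z4 n a b -> Z4E z.
Proof.
rewrite /Z4 inE => /orP [] /lcosetP [y hy ->]; move: hy; rewrite !inE => /orP [/orP [] |] /eqP ->;
  z4solve.
Qed.

Lemma X1_E z : z \in Xk n a 1 -> X1E z.
Proof.
rewrite /Xk inE => /orP [] /lcosetP [y /cycleP [i ->] ->].
  rewrite cMX aXE E_mul; do 2 eexists; split; [|reflexivity]; lia.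
rewrite cMX aXE E_inv E_mul; do 2 eexists; split; [|reflexivity]; lia.
Qed.

Lemma a_Z4 : a \in Z4 n a b.
Proof.
rewrite /Z4 inE; apply/orP; left; apply/lcosetP; exists 1; last by rewrite mulg1.
by rewrite !inE eqxx.
Qed.

Lemma E111_Z4 : E 1 1 1 \in Z4 n a b.
Proof.
have -> : E 1 1 1 = a * (cM n a * b).
  rewrite cM_E [in RHS]bE [in RHS]aE !E_mul; congr E; ring.
rewrite /Z4 inE; apply/orP; left; apply/lcosetP; exists (cM n a * b) => //.
by rewrite !inE eqxx orbT.
Qed.

Lemma a3_X1 : a ^+ 3 \in Xk n a 1.
Proof.
rewrite /Xk inE; apply/orP; left; apply/lcosetP; exists 1; first exact: group1.
by rewrite mulg1.
Qed.

Lemma chainB (x : nat -> gT) : x 0%N = 1 ->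
  (forall i, x i.+1 * (x i)^-1 \in Z4 n a b) ->
  (forall i, x (i + 3)%N * (x i)^-1 \in Xk n a 1) ->
  b ^+ 2 * (x (N - 1)%N)^-1 \notin Z4 n a b.
Proof.
move=> x0 hz hQ.
pose z i := x i.+1 * (x i)^-1.
pose Q i := x (i + 3)%N * (x i)^-1.
have key i : Q i.+1 * z i = z (i + 3)%N * Q i.
  by rewrite /Q /z addSn !mulgA !mulgKV.
have per i : z (i + 3)%N = z i /\ Q i.+1 = Q i.
  exact: Per_E (Z4_E (hz i)) (Z4_E (hz (i + 3)%N)) (X1_E (hQ i)) (X1_E (hQ i.+1)) (key i).
have Qc i : Q i = Q 0%N.
  by elim: i => [//|i IH]; rewrite (proj2 (per i)).
have zp i j : z (i + 3 * j)%N = z i.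
  elim: j => [|j IH]; first by rewrite muln0 addn0.
  by rewrite mulnS addnCA addnC (proj1 (per _)).
have xQ j : x (3 * j)%N = Q 0%N ^+ j.
  elim: j => [|j IH]; first by rewrite muln0 x0 expg0.
  have -> : x (3 * j.+1)%N = Q (3 * j)%N * x (3 * j)%N.
    by rewrite /Q mulnS addnC mulgKV.
  by rewrite Qc IH expgS.
have Q0 : Q 0%N = z 2%N * z 1%N * z 0%N by rewrite /Q /z !mulgA !mulgKV.
have [e [t [v [he hv ht hz2 [u hu]]]]] :=
  Sign_E (X1_E (hQ 0%N)) (Z4_E (hz 0%N)) (Z4_E (hz 1%N)) (Z4_E (hz 2%N)) Q0.
have hN1 : (N - 1 = 2 + 3 * (3 * K - 1))%N by rewrite hNK; lia.
have xN1 : x (N - 1)%N = (z 2%N)^-1 * x N.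
  rewrite -(zp 2%N (3 * K - 1)) -hN1 /z invMg invgK.
  have -> : (N - 1).+1 = N by rewrite hNK; lia.
  by rewrite mulgKV.
have xN : x N = E 0 e 0.
  have -> : N = (3 * (3 * K))%N by rewrite hNK; lia.
  have hu' : Q 0%N = E (3 * e)%R u 0 := hu.
  rewrite (xQ (3 * K)%N) hu' E_powd; apply: E_congr; last by [].
  apply/dvdzP; exists (u * K%:Z)%R; rewrite NzE !PoszM; ring.
have hz2' : z 2%N = E e t v := hz2.
rewrite xN1 xN hz2'; apply/negP => /Z4_E; exact: Final_E.
Qed.

Lemma bZ4 : b * (a ^+ (N - 1))^-1 \in Z4 n a b.
Proof.
have -> : b * (a ^+ (N - 1))^-1 = E 1 1 1.
  rewrite aXE E_inv [in X in X * _]bE E_mul; apply: E_congr; last by [].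
  apply/dvdzP; exists (- 6 * K%:Z)%R.
  have hN1 : ((N - 1)%N%:Z = N%:Z - 1)%R by rewrite subzn // hNK; lia.
  rewrite hN1.
  rewrite NzE; ring.
exact: E111_Z4.
Qed.

End M3.

Lemma orbit_rel (gT : finGroupType) (Gam : {group {perm gT}}) (S : {set gT})
    (g : {perm gT}) (x y : gT) :
  G_right gT \subset Gam -> S \in [set orbit 'P 'C_Gam[1 | 'P] w | w : gT] ->
  g \in 'C_Gam[1 | 'P] -> y * x^-1 \in S -> g y * (g x)^-1 \in S.
Proof.
move=> hsub /imsetP [s _ ->] hg /orbitP [h hh eh].
have hr w : rmul_perm w \in Gam.
  by apply: (subsetP hsub); apply/imsetP; exists w.
have rE w u : rmul_perm w u = u * w by rewrite /rmul_perm permE.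
have /setIP [hgG hg1] := hg.
set d := rmul_perm x * g * rmul_perm (g x)^-1.
have hd : d \in 'C_Gam[1 | 'P].
  rewrite inE; apply/andP; split; first by rewrite !groupM ?hr.
  by apply/astab1P; rewrite /= apermE /d !permM !rE mul1g mulgV.
have -> : g y * (g x)^-1 = aperm s (h * d).
  have eh' : h s = y * x^-1 by rewrite -apermE; exact: eh.
  rewrite apermE permM eh'.
  by rewrite /d !permM !rE mulgKV.
by apply: mem_orbit; rewrite groupM.
Qed.


Theorem proposition4p1 (n : nat) (gT : finGroupType) (a b : gT) :
  4 <= n ->
  <<[set a; b]>> = [set: gT] ->
  #|gT| = (3 ^ n)%N ->
  a ^+ (3 ^ (n - 1)) = 1 ->
  b ^+ 3 = 1 ->
  a ^ b = a ^+ (3 ^ (n - 2) + 1) ->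
  ~ schurian_partition (basic_sets_A n a b).
Proof.
move=> h4 hgen hcard haM hb3 hab [Gam [hsub hS]].
have hNn : (3 ^ (n - 2))%N = (3 ^ (n - 2))%N by [].
move: hab hNn; set N := (3 ^ (n - 2))%N => hab hNn.
set K := (3 ^ (n - 4))%N.
have hNK : N = (9 * K)%N.
  by rewrite /N /K (_ : (n - 2 = 2 + (n - 4))%N); [rewrite expnD | lia].
have hK : (0 < K)%N by rewrite expn_gt0.
have hM : (3 ^ (n - 1))%N = (3 * N)%N.
  by rewrite /N -expnS; congr (3 ^ _)%N; lia.
have hG : #|gT| = (9 * N)%N.
  by rewrite hcard /N (_ : n = 2 + (n - 2))%N; [rewrite expnD addKn | lia].
have hoa' : (#[a] %| 3 * N)%N by rewrite order_dvdn -hM haM.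
have hob' : (#[b] %| 3)%N by rewrite order_dvdn hb3.
have nab : <[b]> \subset 'N(<[a]>).
  rewrite cycle_subG; apply/normP; apply/eqP.
  by rewrite eqEcard cardJg leqnn andbT -cycleJ hab cycle_subG mem_cycle.
have hjoin := norm_joinEr nab.
have hsubAB : [set: gT] \subset <[a]> * <[b]>.
  rewrite -hgen -hjoin gen_subG subUset !sub1set; apply/andP; split.
    by apply: (subsetP (joing_subl _ _)); exact: cycle_id.
  by apply: (subsetP (joing_subr _ _)); exact: cycle_id.
have hcardAB : (9 * N <= #|(<[a]> * <[b]>)%g|)%N.
  by rewrite -hG -cardsT subset_leq_card.
have hmc := mul_cardG <[a]> <[b]>.
have hs0 : (0 < #|<[a]> :&: <[b]>|)%N.
  by rewrite card_gt0; apply/set0Pn; exists 1; rewrite inE !group1.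
have hN0 : (0 < N)%N by rewrite hNK muln_gt0.
have hp : (#[a] <= 3 * N)%N by apply: dvdn_leq => //; rewrite muln_gt0.
have hq : (#[b] <= 3)%N by apply: dvdn_leq.
have hpq : (#[a] * #[b] <= 9 * N)%N.
  by rewrite (_ : 9 * N = (3 * N) * 3)%N ?leq_mul //; lia.
have hrs : (9 * N * #|<[a]> :&: <[b]>| <= #[a] * #[b])%N.
  by rewrite hmc leq_mul.
have hs1 : #|<[a]> :&: <[b]>| = 1%N.
  have : (9 * N * #|<[a]> :&: <[b]>| <= 9 * N * 1)%N.
    by rewrite muln1 (leq_trans hrs hpq).
  rewrite leq_pmul2l ?muln_gt0 // => h1; apply/eqP; rewrite eqn_leq h1 hs0.
  by [].
have hpq' : (#[a] * #[b] = 9 * N)%N.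
  by apply/eqP; rewrite eqn_leq hpq /=; move: hrs; rewrite hs1 muln1.
have hob : #[b] = 3%N.
  case: (ltnP #[b] 3) => hlt; last by apply/eqP; rewrite eqn_leq hq hlt.
  have : (#[a] * #[b] <= (3 * N) * 2)%N by apply: leq_mul => //; lia.
  by rewrite hpq'; lia.
have hoa : #[a] = (3 * N)%N by rewrite hob in hpq'; lia.
have hTI : <[a]> :&: <[b]> = 1.
  by apply: card_le1_trivg; rewrite hs1.
set Ge := 'C_Gam[1 | 'P] in hS.
have memB S : S \in basic_sets_A n a b -> S \in [set orbit 'P Ge w | w : gT].
  by rewrite hS.
have Z1in : Z1 b \in basic_sets_A n a b by rewrite inE eqxx /= orbT.
have Z4in : Z4 n a b \in basic_sets_A n a b by rewrite inE eqxx /= !orbT.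
have h13 : (1 < 3 ^ n)%N by rewrite -(expn0 3) ltn_exp2l //; lia.
have X1in : Xk n a 1 \in basic_sets_A n a b.
  rewrite inE; do 6 (apply/orP; right); apply/orP; left.
  apply/existsP; exists (Ordinal h13) => /=; rewrite eqxx /= andbT leq_divRL //.
  have -> : (n - 3 = 1 + (n - 4))%N by lia.
  by rewrite expnD -/K; lia.
have [s _ hs] := imsetP (memB _ Z1in).
have hb : b \in orbit 'P Ge s by rewrite -hs !inE eqxx.
have hb2 : b ^+ 2 \in orbit 'P Ge s by rewrite -hs !inE eqxx orbT.
have : b ^+ 2 \in orbit 'P Ge b by apply: orbit_trans hb2 _; rewrite orbit_sym.
case/orbitP => g hg hgb.
have gb : g b = b ^+ 2 := hgb.
have g1 : g 1 = 1.
  by have /setIP [_ /astab1P h] := hg; exact: h.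
have Z4B := memB _ Z4in.
have X1B := memB _ X1in.
have hz i : g (a ^+ i.+1) * (g (a ^+ i))^-1 \in Z4 n a b.
  by apply: (orbit_rel hsub Z4B hg); rewrite expgS mulgK a_Z4.
have hQ i : g (a ^+ (i + 3)) * (g (a ^+ i))^-1 \in Xk n a 1.
  by apply: (orbit_rel hsub X1B hg); rewrite addnC expgD mulgK a3_X1.
have g0 : g (a ^+ 0) = 1 by rewrite expg0.
have := @chainB gT a b N K hNK hK hoa hob hTI hab n hNn (fun i => g (a ^+ i))
  g0 hz hQ.
have := orbit_rel hsub Z4B hg (bZ4 hNK hK hoa hob hab hNn).
by rewrite gb => ->.
Qed.
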